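(* Let $(g,f)$ be a Riordan matrix that possesses a type-I $B$-sequence, let $(a_j)_{j\ge0}$ be its $A$-sequence, and write $f(t)=\sum_{j\ge0}f_jt^j$. Then $a_0=1$ and $a_2=0$; equivalently, $f_1=1$ and $f_3=f_2^2$.
   Context: Let $K$ be $\mathbb{R}$ or $\mathbb{C}$. A (proper) Riordan matrix is a pair $(g,f)$ of formal power series in $K[[t]]$ with $g(0)=1$, $f(0)=0$, $f'(0)\neq 0$, identified with the infinite lower triangular matrix $(d_{n,k})_{n,k\ge0}$, $d_{n,k}=[t^n]g(t)f(t)^k$; we set $d_{n,k}=0$ if $n<0$, $k<0$ or $k>n$. The $A$-sequence $(a_j)_{j\ge0}$ of $(g,f)$ is the unique sequence whose generating function $A(t)=\sum_j a_jt^j$ satisfies $f(t)=tA(f(t))$. A type-I $B$-sequence of $(g,f)$ is a sequence $(b_j)_{j\ge0}$ such that $d_{n+1,k}=d_{n,k-1}+\sum_{j\ge0}b_j d_{n-j,k+j}$ for all $n\ge0$ and $k\ge1$. *)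

(* Defs.v *)
From mathcomp Require Import all_boot all_order all_algebra.
Set Implicit Arguments. Unset Strict Implicit. Unset Printing Implicit Defensive.
Import Order.TTheory GRing.Theory Num.Theory.
Local Open Scope ring_scope.

Definition fps (K : Type) := nat -> K.

Definition fps_mul (K : numFieldType) (a b : fps K) : fps K :=
  fun n => \sum_(i < n.+1) a i * b (n - i)%N.

Definition fps_one (K : numFieldType) : fps K := fun n => if n == 0%N then 1 else 0.

Fixpoint fps_pow (K : numFieldType) (f : fps K) (k : nat) : fps K :=
  match k with
  | 0%N => fps_one K
  | k'.+1 => fps_mul (fps_pow f k') f
  end.

Definition is_riordan (K : numFieldType) (g f : fps K) : Prop :=
  g 0%N = 1 /\ f 0%N = 0 /\ f 1%N != 0.

Definition riordan_entry (K : numFieldType) (g f : fps K) (n k : nat) : K :=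
  if (k <= n)%N then fps_mul g (fps_pow f k) n else 0.

(* a is the A-sequence of f: f(t) = t A(f(t)), i.e. for all n,
   [t^n] f = [t^(n-1)] A(f) (with [t^0] f = 0 since f(0)=0), where
   [t^m] A(f) = sum_{j<=m} a_j [t^m] f^j  (terms j > m vanish as f(0)=0). *)
Definition is_A_sequence (K : numFieldType) (f : fps K) (a : nat -> K) : Prop :=
  f 0%N = 0 /\
  forall m : nat, f m.+1 = \sum_(j < m.+1) a j * fps_pow f j m.

(* type-I B-sequence: d_{n+1,k} = d_{n,k-1} + sum_{j>=0} b_j d_{n-j,k+j}
   for n >= 0, k >= 1; the terms with j > n vanish (d_{n-j,.} = 0 for n-j < 0). *)
Definition is_typeI_B_sequence (K : numFieldType) (g f : fps K) (b : nat -> K) : Prop :=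
  forall n k : nat, (1 <= k)%N ->
    riordan_entry g f n.+1 k =
      riordan_entry g f n k.-1 +
      \sum_(j < n.+1) b j * riordan_entry g f (n - j)%N (k + j)%N.

(* Main.v *)
Require Import Defs.
From mathcomp Require Import all_boot all_order all_algebra.
From mathcomp Require Import ring.
Import Order.TTheory GRing.Theory Num.Theory.
Local Open Scope ring_scope.

Lemma mul1l (K : numFieldType) (b : fps K) n : fps_mul (fps_one K) b n = b n.
Proof.
rewrite /fps_mul big_ord_recl /= subn0 /fps_one /= mul1r big1 ?addr0 // => i _.
by rewrite mul0r.
Qed.

Lemma pow1 (K : numFieldType) (f : fps K) n : fps_pow f 1 n = f n.
Proof. by rewrite /= mul1l. Qed.

Lemma mulext (K : numFieldType) (a a' b : fps K) n :
  (forall m, a m = a' m) -> fps_mul a b n = fps_mul a' b n.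
Proof. by move=> H; apply: eq_bigr => i _; rewrite H. Qed.

Lemma pow2 (K : numFieldType) (f : fps K) n : fps_pow f 2 n = fps_mul f f n.
Proof. by apply: (@mulext _ _ f) => m; exact: pow1. Qed.

Theorem theorem2p2 (K : numFieldType) (g f : fps K) (a : nat -> K) :
  is_riordan g f ->
  (exists b : nat -> K, is_typeI_B_sequence g f b) ->
  is_A_sequence f a ->
  (a 0%N = 1 /\ a 2%N = 0) /\ (f 1%N = 1 /\ f 3%N = f 2%N ^+ 2).
Proof.
move=> [g0 [f0 f1n0]] [b Hb] [_ HA].
have E1 := Hb 0%N 1%N isT.
have E2 := Hb 1%N 1%N isT.
have E3 := Hb 2%N 1%N isT.
have A0 := HA 0%N. have A1 := HA 1%N. have A2 := HA 2%N.
move: E1 E2 E3 A0 A1 A2.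
rewrite /riordan_entry /= /fps_mul !big_ord_recr !big_ord0 /= ?pow2 ?pow1 /fps_mul /fps_one /=.
rewrite !big_ord_recr !big_ord0 /= ?pow1 /fps_one /=.
rewrite g0 f0.
rewrite ?(subn0, subSS, subnn) ?(mul0r, mul1r, addr0, add0r, mulr0, mulr1).
move=> E1; rewrite E1 !mulr1 => E2 E3 A0 A1 A2.
have hb : b 0%N = f 2%N by rewrite -(addKr (g 1%N) (b 0%N)) -E2; ring.
rewrite hb in E3.
have h3 : f 3%N = f 2%N ^+ 2.
  have -> : f 3%N = (f 3%N + g 1%N * f 2%N + g 2%N) - g 1%N * f 2%N - g 2%N by ring.
  rewrite E3; ring.
have ha1 : a 1%N = f 2%N by rewrite A1.
split; last by [].
split; first by rewrite -A0.
have -> : a 2%N = (a 1%N * f 2%N + a 2%N) - a 1%N * f 2%N by ring.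
rewrite -A2 h3 ha1; ring.
Qed.
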